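(* Let $G$ be a graph and $\mathscr{C}$ a group-theoretical graph category. Then for all $k,l\in\mathbb{N}_0$, $$\mathrm{span}\{\hat T^G_{\mathbf{K}}\mid\mathbf{K}\in\mathscr{C}(k,l)\}=\mathrm{span}\{T^G_{\mathbf{K}}\mid\mathbf{K}\in\mathscr{C}(k,l)\}.$$
   Context: Graphs are finite, undirected, without multiple edges, loops allowed, up to isomorphism; $N_k$ is the edgeless graph on $k$ vertices; graph homomorphisms map edges (including loops) to edges. Bilabelled graph: $(K,\mathbf{a},\mathbf{b})$ with $\mathbf{a}\in V(K)^k$, $\mathbf{b}\in V(K)^l$, up to isomorphism; $\mathscr{C}(k,l)$ denotes those in $\mathscr{C}$ with $k$ inputs and $l$ outputs. Operations: tensor product $(K,\mathbf{a},\mathbf{b})\otimes(H,\mathbf{c},\mathbf{d})=(K\sqcup H,\mathbf{a}\mathbf{c},\mathbf{b}\mathbf{d})$; composition (for $|\mathbf{b}|=|\mathbf{c}|$) $(H,\mathbf{c},\mathbf{d})\cdot(K,\mathbf{a},\mathbf{b})=(H\cdot K,\mathbf{a},\mathbf{d})$ with $H\cdot K$ the quotient of $K\sqcup H$ identifying $b_i$ with $c_i$; involution swaps $\mathbf{a},\mathbf{b}$. For a partition $\pi$ of $V(K)$, $K/\pi$ has the blocks as vertices, with an edge between two (possibly equal) blocks iff there is one in $K$ between some of their elements, and $(K,\mathbf{a},\mathbf{b})/\pi=(K/\pi,q_\pi(\mathbf{a}),q_\pi(\mathbf{b}))$. A graph category is a set of bilabelled graphs containing $(N_0,\emptyset,\emptyset)$,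 $(M,(v),(v))$ and $(M,\emptyset,(v,v))$ ($M$ the one-vertex loopless graph with vertex $v$) and closed under tensor products, compositions and involution; it is group-theoretical if it is closed under all quotients $\mathbf{K}\mapsto\mathbf{K}/\pi$. With the vertices of $G$ labelled $1,\dots,n$, $[T^G_{\mathbf{K}}]_{\mathbf{j}\mathbf{i}}=\#\{\phi\colon K\to G\text{ homomorphism}\mid\phi(\mathbf{a})=\mathbf{i},\phi(\mathbf{b})=\mathbf{j}\}$, and $\hat T^G_{\mathbf{K}}$ is defined the same way counting only injective homomorphisms; both are linear maps $(\mathbb{C}^n)^{\otimes k}\to(\mathbb{C}^n)^{\otimes l}$. *)

(* Defs.v *)
From HB Require Import structures.
From mathcomp Require Import all_boot all_order all_algebra.
From mathcomp Require Import complex reals.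
Unset Printing Implicit Defensive.
Import Order.TTheory GRing.Theory Num.Theory.
Local Open Scope ring_scope.

(* The relation gadj need not be
   symmetric: the (undirected) edge set is its symmetrization [gedge];
   gedge u u is a loop. *)
Record graph := Graph { gsize : nat; gadj : rel 'I_gsize }.

Definition gedge (G : graph) (u v : 'I_(gsize G)) : bool :=
  gadj G u v || gadj G v u.

Record bgraph := BGraph {
  bg : graph;
  bin : seq 'I_(gsize bg);
  bout : seq 'I_(gsize bg) }.

Definition biso (K H : bgraph) : Prop :=
  exists f : 'I_(gsize (bg K)) -> 'I_(gsize (bg H)),
    bijective f /\
    (forall u v, gedge (bg H) (f u) (f v) = gedge (bg K) u v) /\
    map f (bin K) = bin H /\ map f (bout K) = bout H.

Definition Mgraph : graph := @Graph 1 (fun _ _ : 'I_1 => false).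
Definition N0b : bgraph := @BGraph (@Graph 0 (fun _ _ : 'I_0 => false)) [::] [::].
Definition M11 : bgraph := @BGraph Mgraph [:: ord0] [:: ord0].
Definition M02 : bgraph := @BGraph Mgraph [::] [:: ord0; ord0].

Definition dunion_adj (K H : graph) (x y : 'I_(gsize K + gsize H)) : bool :=
  match split x, split y with
  | inl x', inl y' => gadj K x' y'
  | inr x', inr y' => gadj H x' y'
  | _, _ => false
  end.
Definition dunion (K H : graph) : graph := @Graph (gsize K + gsize H) (dunion_adj K H).

Definition btensor (K H : bgraph) : bgraph :=
  @BGraph (dunion (bg K) (bg H))
    (map (@lshift _ _) (bin K) ++ map (@rshift _ _) (bin H))
    (map (@lshift _ _) (bout K) ++ map (@rshift _ _) (bout H)).

Definition binvol (K : bgraph) : bgraph := @BGraph (bg K) (bout K) (bin K).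

(* Quotient of a graph along a map q (a partition pi of V(K) is given by a
   surjection q onto 'I_p whose fibres are the blocks): two (possibly equal)
   blocks are adjacent iff some of their elements are adjacent in K. *)
Definition gquot (K : graph) (p : nat) (q : 'I_(gsize K) -> 'I_p) : graph :=
  @Graph p (fun x y => [exists u, exists v, (q u == x) && (q v == y) && gadj K u v]).

Definition bquot (K : bgraph) (p : nat) (q : 'I_(gsize (bg K)) -> 'I_p) : bgraph :=
  @BGraph (gquot (bg K) p q) (map q (bin K)) (map q (bout K)).

Definition surj {A B : Type} (f : A -> B) : Prop := forall y, exists x, f x = y.

(* The identifications b_i ~ c_i on K ⊔ H, used for the composition H . K *)
Definition comp_rel (K H : bgraph) : rel 'I_(gsize (bg K) + gsize (bg H)) :=
  fun u v =>
    let z := zip (map (@lshift _ _) (bout K)) (map (@rshift _ _) (bin H)) in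
    ((u, v) \in z) || ((v, u) \in z).

Definition comp_quotient (K H : bgraph) (p : nat)
    (q : 'I_(gsize (bg K) + gsize (bg H)) -> 'I_p) : Prop :=
  surj q /\ forall u v, (q u == q v) = connect (comp_rel K H) u v.

(* The composition (H, c, d) . (K, a, b) = (H . K, a, d), computed via q *)
Definition bcomp (K H : bgraph) (p : nat)
    (q : 'I_(gsize (bg K) + gsize (bg H)) -> 'I_p) : bgraph :=
  @BGraph (gquot (dunion (bg K) (bg H)) p q)
    (map (fun x => q (@lshift _ _ x)) (bin K))
    (map (fun x => q (@rshift _ _ x)) (bout H)).

(* A set of bilabelled graphs (up to isomorphism, i.e. an isomorphism-closed
   predicate on concrete representatives). *)
Definition graph_category (C : bgraph -> Prop) : Prop :=
  [/\ (forall K H, biso K H -> C K -> C H),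
      C N0b /\ C M11 /\ C M02,
      (forall K H, C K -> C H -> C (btensor K H)),
      (forall K H p (q : 'I_(gsize (bg K) + gsize (bg H)) -> 'I_p),
          size (bout K) = size (bin H) -> comp_quotient K H p q ->
          C K -> C H -> C (bcomp K H p q))
    & (forall K, C K -> C (binvol K))].

Definition group_theoretical (C : bgraph -> Prop) : Prop :=
  graph_category C /\
  (forall K p (q : 'I_(gsize (bg K)) -> 'I_p), surj q -> C K -> C (bquot K p q)).

Definition is_hom (K G : graph) (f : 'I_(gsize K) -> 'I_(gsize G)) : bool :=
  [forall u, forall v, gedge K u v ==> gedge G (f u) (f v)].

Definition hom_count (G : graph) (K : bgraph) (i j : seq 'I_(gsize G)) : nat :=
  #|[pred f : {ffun 'I_(gsize (bg K)) -> 'I_(gsize G)} |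
      is_hom (bg K) G f && (map f (bin K) == i) && (map f (bout K) == j)]|.
Definition inj_hom_count (G : graph) (K : bgraph) (i j : seq 'I_(gsize G)) : nat :=
  #|[pred f : {ffun 'I_(gsize (bg K)) -> 'I_(gsize G)} |
      injectiveb f && is_hom (bg K) G f && (map f (bin K) == i) && (map f (bout K) == j)]|.

(* T^G_K and \hat T^G_K as (C^n)^{⊗k} -> (C^n)^{⊗l}, given by their entries
   [T]_{j i} with j an l-tuple and i a k-tuple of vertices of G. *)
Definition homT {F : fieldType} (G : graph) (k l : nat) (K : bgraph)
    (j : l.-tuple 'I_(gsize G)) (i : k.-tuple 'I_(gsize G)) : F :=
  (hom_count G K i j)%:R.
Definition injhomT {F : fieldType} (G : graph) (k l : nat) (K : bgraph)
    (j : l.-tuple 'I_(gsize G)) (i : k.-tuple 'I_(gsize G)) : F :=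
  (inj_hom_count G K i j)%:R.

Definition in_span {F : fieldType} {X A B : Type} (P : X -> Prop)
    (T : X -> A -> B -> F) (v : A -> B -> F) : Prop :=
  exists (N : nat) (Ks : 'I_N -> X) (c : 'I_N -> F),
    (forall t, P (Ks t)) /\ forall j i, v j i = \sum_(t < N) c t * T (Ks t) j i.

Definition Ckl (C : bgraph -> Prop) (k l : nat) (K : bgraph) : Prop :=
  C K /\ size (bin K) = k /\ size (bout K) = l.

(* Main.v *)
Require Import Defs.
From HB Require Import structures.
From mathcomp Require Import all_boot all_order all_algebra.
From mathcomp Require Import complex reals.
From mathcomp Require Import zify.
Import GRing.Theory Num.Theory.
Local Open Scope ring_scope.
Local Close Scope ring_scope.

Section Span.
Local Open Scope ring_scope.
Variables (F : fieldType) (X A B : Type) (P : X -> Prop) (T : X -> A -> B -> F).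

Lemma span_ext v w : (forall j i, v j i = w j i) -> in_span P T v -> in_span P T w.
Proof.
move=> e [N [Ks [c [HP Hv]]]]; exists N, Ks, c; split=> // j i.
by rewrite -e Hv.
Qed.

Lemma span0 : in_span P T (fun _ _ => 0).
Proof.
exists 0%N, (fun t : 'I_0 => False_rect X (notF (ltn_ord t))),
  (fun _ => 0); split; first by case.
by move=> j i; rewrite big_ord0.
Qed.

Lemma span_gen K : P K -> in_span P T (T K).
Proof.
move=> HK; exists 1%N, (fun _ => K), (fun _ => 1); split=> // j i.
by rewrite big_ord1 mul1r.
Qed.

Lemma span_lin a v w : in_span P T v -> in_span P T w ->
  in_span P T (fun j i => a * v j i + w j i).
Proof.
move=> [N1 [K1 [c1 [HP1 Hv]]]] [N2 [K2 [c2 [HP2 Hw]]]].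
exists (N1 + N2)%N,
  (fun t => match split t with inl x => K1 x | inr y => K2 y end),
  (fun t => match split t with inl x => a * c1 x | inr y => c2 y end).
split.
  by move=> t; case: (split t).
move=> j i; rewrite big_split_ord /= Hv Hw mulr_sumr; congr (_ + _).
  apply: eq_bigr => x _.
  by rewrite (unsplitK (inl x)) mulrA.
apply: eq_bigr => x _.
by rewrite (unsplitK (inr x)).
Qed.

Lemma span_sum N (u : 'I_N -> A -> B -> F) (c : 'I_N -> F) :
  (forall t, in_span P T (u t)) ->
  in_span P T (fun j i => \sum_(t < N) c t * u t j i).
Proof.
elim: N u c => [|N IH] u c Hu.
  by apply: span_ext span0 => j i; rewrite big_ord0.
apply: (@span_ext (fun j i => c ord_max * u ord_max j i +
          \sum_(t < N) c (widen_ord (leqnSn N) t) * u (widen_ord (leqnSn N) t) j i)).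
  by move=> j i; rewrite big_ord_recr /= addrC.
apply: span_lin => //.
exact: (IH (fun t => u (widen_ord (leqnSn N) t))).
Qed.

End Span.
Arguments span_ext {F X A B P T v w}.
Arguments span_gen {F X A B P T} K.
Arguments span_lin {F X A B P T}.
Arguments span_sum {F X A B P T N}.
Arguments span0 {F X A B P T}.


Definition injon n m (t : nat) (f : 'I_n -> 'I_m) : bool :=
  [forall u : 'I_n, forall v : 'I_n, ((u < t) && (v < t) && (f u == f v)) ==> (u == v)].

Arguments injon {n m}.

Lemma injonP n m t (f : 'I_n -> 'I_m) :
  reflect (forall u v : 'I_n, u < t -> v < t -> f u = f v -> u = v) (injon t f).
Proof.
apply: (iffP forallP) => H.
  move=> u v ut vt e; move/forallP: (H u) => /(_ v).
  by rewrite ut vt e eqxx => /implyP/(_ isT)/eqP.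
move=> u; apply/forallP => v; apply/implyP => /andP[/andP[ut vt] /eqP e].
by apply/eqP; apply: H.
Qed.

Lemma injonS n m t (f : 'I_n -> 'I_m) : injon t.+1 f -> injon t f.
Proof.
move/injonP=> H; apply/injonP=> u v ut vt; apply: H; exact: ltnW.
Qed.

Lemma injon_all n m (f : 'I_n -> 'I_m) : injon n f = injectiveb f.
Proof.
apply/injonP/injectiveP => H u v.
  by apply: H.
by move=> _ _; apply: H.
Qed.

Lemma injon0 n m (f : 'I_n -> 'I_m) : injon 0 f.
Proof. by apply/injonP. Qed.

Lemma card_split n m (P : pred {ffun 'I_n -> 'I_m}) (t : nat) (Ht : t < n) :
  #|[pred f : {ffun 'I_n -> 'I_m} | P f && injon t f]| =
  (#|[pred f : {ffun 'I_n -> 'I_m} | P f && injon t.+1 f]| +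
  \sum_(w < t) #|[pred f : {ffun 'I_n -> 'I_m} | P f && injon t f &&
       (f (Ordinal Ht) == f (Ordinal (ltn_trans (ltn_ord w) Ht)))]|)%N.
Proof.
have cE : forall (Q : pred {ffun 'I_n -> 'I_m}), #|[pred f | Q f]| = (\sum_f (Q f : nat))%N.
  by move=> Q; rewrite -sum1_card big_mkcond; apply: eq_bigr => f _; rewrite inE; case: (Q f).
rewrite !cE.
under [\sum_(w < t) _]eq_bigr do rewrite cE.
rewrite exchange_big /= -big_split /=.
apply: eq_bigr => f _.

case Pf: (P f) => /=; last first.
  by rewrite big1.
case It: (injon t f) => /=; last first.
  rewrite big1; last by [].
  by case: (injon t.+1 f) (@injonS _ _ t f) => // /(_ isT); rewrite It.
have Hw : forall w : 'I_t, (f (Ordinal Ht) == f (Ordinal (ltn_trans (ltn_ord w) Ht)))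
   -> ~~ injon t.+1 f.
  move=> w /eqP e; apply/negP => /injonP H.
  have := H (Ordinal Ht) (Ordinal (ltn_trans (ltn_ord w) Ht)) (ltnSn t) (leqW (ltn_ord w)) e.
  by move/(congr1 val) => /= ew; move: (ltn_ord w); rewrite -ew ltnn.
case It1: (injon t.+1 f).
  rewrite big1 // => w _ /=.
  by case: eqP => // /eqP /Hw; rewrite It1.
(* exactly one w *)
have /existsP [w0 /eqP e0] : [exists w0 : 'I_t, f (Ordinal Ht) == f (Ordinal (ltn_trans (ltn_ord w0) Ht))].
  move/negbT: It1 => /injonP.
  have key : forall u v : 'I_n, u < t.+1 -> v < t.+1 -> f u = f v -> u <> v ->
      ~~ (v < t) -> exists w0 : 'I_t, f (Ordinal Ht) = f (Ordinal (ltn_trans (ltn_ord w0) Ht)).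
    move=> u v ut vt e uv vnt.
    have vt' : (v : nat) = t by lia.
    have ut' : u < t.
      case: (ltnP u t) => // ht; case: uv; apply: val_inj => /=; lia.
    exists (Ordinal ut'); rewrite [Ordinal Ht](_ : _ = v); last exact: val_inj.
    by rewrite -e; apply: f_equal; apply: val_inj.
  move=> nH; apply: contraT => nex; case: nH => u v ut vt e.
  case: (boolP (u == v)) => [/eqP //|/eqP uv].
  case: (boolP (v < t)) => vlt.
    case: (boolP (u < t)) => ult.
      by move/injonP: It => /(_ u v ult vlt e).
    by case/negP: nex; have [w0 e0] := (key v u vt ut (esym e) (nesym uv) ult); apply/existsP; exists w0; apply/eqP.
  by case/negP: nex; have [w0 e0] := (key u v ut vt e uv vlt); apply/existsP; exists w0; apply/eqP.
rewrite (bigD1 w0) //= e0 eqxx big1 // => w ww0.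
rewrite -e0; apply/eqP; rewrite eqb0; apply/eqP => e.
move/injonP: It => /(_ (Ordinal (ltn_trans (ltn_ord w0) Ht)) (Ordinal (ltn_trans (ltn_ord w) Ht)) (ltn_ord w0) (ltn_ord w) (etrans (esym e0) e)) /(congr1 val) /= ew.
by move/eqP: ww0; apply; apply: val_inj.
Qed.

Section Cpart.
Set Implicit Arguments.
Unset Strict Implicit.

Definition qv (t w u : nat) : nat := if u < t then u else if u == t then w else u.-1.
Lemma qv_lt n t w u : w < t -> t < n -> u < n -> qv t w u < n.-1.
Proof. rewrite /qv => *; case: ifP => h1; last case: ifP => h2; lia. Qed.
Definition qmap n t w (Hw : w < t) (Ht : t < n) (u : 'I_n) : 'I_n.-1 :=
  Ordinal (qv_lt Hw Ht (ltn_ord u)).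
Definition sv (t x : nat) : nat := if x < t then x else x.+1.
Lemma sv_lt n t x : t < n -> x < n.-1 -> sv t x < n.
Proof. rewrite /sv => *; case: ifP => h1; lia. Qed.
Definition smap n t (Ht : t < n) (x : 'I_n.-1) : 'I_n := Ordinal (sv_lt Ht (ltn_ord x)).

Lemma qv_sv t w x : qv t w (sv t x) = x.
Proof.
rewrite /qv /sv; case: (ltnP x t) => h; first by rewrite h.
have -> : (x.+1 < t) = false by apply/negbTE; lia.
have -> : (x.+1 == t) = false by apply/negbTE; lia.
by [].
Qed.

Lemma sv_qv_lt t w u : u < t -> sv t (qv t w u) = u.
Proof. by move=> h; rewrite /qv /sv h h. Qed.
Lemma sv_qv_gt t w u : t < u -> sv t (qv t w u) = u.
Proof.
move=> h; rewrite /qv /sv.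
have -> : (u < t) = false by apply/negbTE; lia.
have -> : (u == t) = false by apply/negbTE; lia.
have -> : (u.-1 < t) = false by apply/negbTE; lia.
lia.
Qed.
Lemma sv_qv_eq t w : w < t -> sv t (qv t w t) = w.
Proof. by move=> h; rewrite /qv /sv ltnn eqxx h. Qed.

Lemma qsK n t w (Hw : w < t) (Ht : t < n) x : qmap Hw Ht (smap Ht x) = x.
Proof. by apply: val_inj; rewrite /= qv_sv. Qed.

Lemma sqK n t w (Hw : w < t) (Ht : t < n) (Y : Type) (f : 'I_n -> Y) :
  f (Ordinal Ht) = f (Ordinal (ltn_trans Hw Ht)) ->
  forall u, f (smap Ht (qmap Hw Ht u)) = f u.
Proof.
move=> e u.
case: (ltngtP u t) => h.
- by congr f; apply: val_inj; rewrite /= sv_qv_lt.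
- by congr f; apply: val_inj; rewrite /= sv_qv_gt.
- rewrite [u in RHS](_ : _ = Ordinal Ht); last exact: val_inj.
  rewrite e; congr f; apply: val_inj; rewrite /= h sv_qv_eq //.
Qed.

Lemma qmap_lt n t w (Hw : w < t) (Ht : t < n) (u : 'I_n) : u < t -> val (qmap Hw Ht u) = u.
Proof. by move=> h; rewrite /= /qv h. Qed.

Lemma gedge_quot (K : graph) p (q : 'I_(gsize K) -> 'I_p) u v :
  gedge K u v -> gedge (gquot K p q) (q u) (q v).
Proof.
rewrite /gedge /= => /orP [h|h]; apply/orP; [left|right]; apply/existsP.
  by exists u; apply/existsP; exists v; rewrite !eqxx h.
by exists v; apply/existsP; exists u; rewrite !eqxx h.
Qed.

Lemma gedge_quotE (K : graph) p (q : 'I_(gsize K) -> 'I_p) x y :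
  gedge (gquot K p q) x y -> exists u v, q u = x /\ q v = y /\ gedge K u v.
Proof.
rewrite /gedge /= => /orP [] /existsP [u] /existsP [v] /andP [/andP [/eqP a /eqP b] h].
  by exists u, v; rewrite /gedge h.
by exists v, u; rewrite /gedge h orbT.
Qed.

Lemma card_quot (K : bgraph) (G : graph) t w (Hw : w < t) (Ht : t < gsize (bg K))
    (i j : seq 'I_(gsize G)) :
  #|[pred f : {ffun 'I_(gsize (bg K)) -> 'I_(gsize G)} |
      is_hom (bg K) G f && (map f (bin K) == i) && (map f (bout K) == j) && injon t f
      && (f (Ordinal Ht) == f (Ordinal (ltn_trans Hw Ht)))]|
  = #|[pred g : {ffun 'I_(gsize (bg (bquot K (gsize (bg K)).-1 (qmap Hw Ht)))) -> 'I_(gsize G)} |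
      is_hom (bg (bquot K (gsize (bg K)).-1 (qmap Hw Ht))) G g
      && (map g (bin (bquot K (gsize (bg K)).-1 (qmap Hw Ht))) == i)
      && (map g (bout (bquot K (gsize (bg K)).-1 (qmap Hw Ht))) == j) && injon t g]|.
Proof.
set q := qmap Hw Ht; set s := smap Ht.
pose Phi := fun g : {ffun 'I_(gsize (bg K)).-1 -> 'I_(gsize G)} =>
  [ffun u => g (q u)] : {ffun 'I_(gsize (bg K)) -> 'I_(gsize G)}.
have Pinj : injective Phi.
  move=> g1 g2 /ffunP e; apply/ffunP => x.
  by have := e (s x); rewrite !ffunE /q /s qsK.
rewrite -(card_imset _ Pinj).
apply: eq_card => f; rewrite !inE.
apply/idP/imsetP.
- move=> /andP [/andP [/andP [/andP [hom bi] bo] inj] /eqP ftw].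
  have fK := sqK ftw.
  exists [ffun x => f (s x)].
    rewrite inE; apply/andP; split; [apply/andP; split; [apply/andP; split|]|].
    + apply/forallP => x; apply/forallP => y; apply/implyP => /gedge_quotE [u [v [<- [<- e]]]].
      rewrite !ffunE fK fK.
      by move/forallP: hom => /(_ u) /forallP /(_ v) /implyP /(_ e).
    + rewrite /= -map_comp; rewrite -(eqP bi); apply/eqP/eq_map => u.
      by rewrite /= ffunE fK.
    + rewrite /= -map_comp; rewrite -(eqP bo); apply/eqP/eq_map => u.
      by rewrite /= ffunE fK.
    + apply/injonP => x y xt yt; rewrite !ffunE => e.
      have sx : val (s x) = x by rewrite /= /sv xt.
      have sy : val (s y) = y by rewrite /= /sv yt.
      move/injonP: inj => /(_ (s x) (s y)); rewrite sx sy => /(_ xt yt e) /(congr1 val).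
      by rewrite sx sy => /val_inj.
  by apply/ffunP => u; rewrite !ffunE fK.
- move=> [g]; rewrite inE => /andP [/andP [/andP [hom bi] bo] inj] ->.
  apply/andP; split; [apply/andP; split; [apply/andP; split; [apply/andP; split|]|]|].
  + apply/forallP => u; apply/forallP => v; apply/implyP => e; rewrite !ffunE.
    move/forallP: hom => /(_ (q u)) /forallP /(_ (q v)) /implyP; apply.
    exact: gedge_quot.
  + rewrite -(eqP bi) /= -map_comp; apply/eqP/eq_map => u; by rewrite /= ffunE.
  + rewrite -(eqP bo) /= -map_comp; apply/eqP/eq_map => u; by rewrite /= ffunE.
  + apply/injonP => u v ut vt; rewrite !ffunE => e.
    have qu := qmap_lt Hw Ht ut; have qv := qmap_lt Hw Ht vt.
    move/injonP: inj => /(_ (q u) (q v)); rewrite /q qu qv => /(_ ut vt e) /(congr1 val).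
    by rewrite qu qv => /val_inj.
  + rewrite !ffunE; apply/eqP; apply: f_equal; apply: val_inj; rewrite /= /qv ltnn eqxx.
    by rewrite Hw.
Qed.

End Cpart.
Unset Implicit Arguments.
Set Strict Implicit.


Definition cnt (G : graph) (K : bgraph) (t : nat) (i j : seq 'I_(gsize G)) : nat :=
  #|[pred f : {ffun 'I_(gsize (bg K)) -> 'I_(gsize G)} |
     is_hom (bg K) G f && (map f (bin K) == i) && (map f (bout K) == j) && injon t f]|.

Definition Kq (K : bgraph) t (Ht : t < gsize (bg K)) (w : 'I_t) : bgraph :=
  bquot K (gsize (bg K)).-1 (qmap (ltn_ord w) Ht).
Arguments Kq {K t}.

Lemma cnt_rec G K t (Ht : t < gsize (bg K)) i j :
  cnt G K t i j = (cnt G K t.+1 i j + \sum_(w < t) cnt G (Kq Ht w) t i j)%N.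
Proof.
apply: etrans (@card_split _ _ (fun f : {ffun 'I_(gsize (bg K)) -> 'I_(gsize G)} =>
   is_hom (bg K) G f && (map f (bin K) == i) && (map f (bout K) == j)) _ Ht) _.
congr (_ + _)%N.
by apply: eq_bigr => w _; rewrite (card_quot (ltn_ord w) Ht i j).
Qed.
Arguments cnt_rec {G K t}.

Definition NtF (F : fieldType) (G : graph) (k l : nat) (K : bgraph) (t : nat) (j : l.-tuple 'I_(gsize G)) (i : k.-tuple 'I_(gsize G)) : F :=
  ((cnt G K t i j)%:R)%R.

Lemma NtF_rec F G k l K t (Ht : t < gsize (bg K)) j i :
  (@NtF F G k l K t j i = @NtF F G k l K t.+1 j i + \sum_(w < t) @NtF F G k l (Kq Ht w) t j i)%R.
Proof. by rewrite /NtF (cnt_rec Ht) natrD natr_sum. Qed.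
Arguments NtF_rec {F G k l K t}.

Lemma NtF0 F G k l K j i : @NtF F G k l K 0 j i = @homT F G k l K j i.
Proof.
rewrite /NtF /homT /hom_count /cnt; congr (_ %:R)%R.
by apply: eq_card => f; rewrite !inE injon0 andbT.
Qed.

Lemma NtFn F G k l K j i : @NtF F G k l K (gsize (bg K)) j i = @injhomT F G k l K j i.
Proof.
rewrite /NtF /injhomT /inj_hom_count /cnt; congr (_ %:R)%R.
apply: eq_card => f; rewrite !inE injon_all.
by case: (injectiveb f); rewrite ?andbT ?andbF.
Qed.

Lemma Kq_C C k l K t (Ht : t < gsize (bg K)) (w : 'I_t) :
  group_theoretical C -> Ckl C k l K -> Ckl C k l (Kq Ht w).
Proof.
move=> [_ Hq] [CK [bi bo]]; split; last by rewrite /= !size_map.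
apply: Hq => //.
by move=> y; exists (smap Ht y); rewrite qsK.
Qed.

Section Main.
Variables (F : fieldType) (G : graph) (C : bgraph -> Prop) (k l : nat).
Hypothesis HC : group_theoretical C.

Lemma claimH n : forall K, gsize (bg K) = n -> Ckl C k l K -> forall t, t <= n ->
  in_span (Ckl C k l) (@injhomT F G k l) (@NtF F G k l K t).
Proof.
elim/ltn_ind: n => n IHn K HK CK t tn.
move Hd: (n - t)%N => d; elim: d t tn Hd => [|d IHd] t tn Hd.
  have -> : t = gsize (bg K) by lia.
  apply: span_ext (span_gen _ CK) => j i; by rewrite NtFn.
have Ht : t < gsize (bg K) by lia.
apply: (@span_ext _ _ _ _ _ _ (fun j i => 1 * @NtF F G k l K t.+1 j i +
    \sum_(w < t) 1 * @NtF F G k l (Kq Ht w) t j i)%R).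
  by move=> j i; rewrite mul1r (NtF_rec Ht); under eq_bigr do rewrite mul1r.
apply: span_lin; first by apply: IHd; lia.
apply: span_sum => w.
apply: (IHn (gsize (bg K)).-1) => //; first lia.
  exact: Kq_C.
lia.
Qed.

Lemma claimT n : forall K, gsize (bg K) = n -> Ckl C k l K -> forall t, t <= n ->
  in_span (Ckl C k l) (@homT F G k l) (@NtF F G k l K t).
Proof.
elim/ltn_ind: n => n IHn K HK CK t; elim: t => [|t IHt] tn.
  apply: span_ext (span_gen _ CK) => j i; by rewrite NtF0.
have Ht : t < gsize (bg K) by lia.
apply: (@span_ext _ _ _ _ _ _ (fun j i => 1 * @NtF F G k l K t j i +
    \sum_(w < t) (-1) * @NtF F G k l (Kq Ht w) t j i)%R).
  move=> j i; rewrite mul1r.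
  under eq_bigr do rewrite mulN1r.
  by rewrite (NtF_rec Ht) sumrN addrK.
apply: span_lin; first by apply: IHt; lia.
apply: span_sum => w.
apply: (IHn (gsize (bg K)).-1) => //; first lia.
  exact: Kq_C.
lia.
Qed.

End Main.

Local Open Scope ring_scope.

Theorem proposition4p9 (R : realType) (G : graph) (C : bgraph -> Prop) :
  group_theoretical C ->
  forall (k l : nat) (v : l.-tuple 'I_(gsize G) -> k.-tuple 'I_(gsize G) -> R[i]),
    in_span (Ckl C k l) (@injhomT R[i] G k l) v <->
    in_span (Ckl C k l) (@homT R[i] G k l) v.
Proof.
move=> HC k l v; split.
- case=> [N [Ks [c [HP Hv]]]].
  apply: (@span_ext _ _ _ _ _ _ (fun j i => \sum_(t < N) c t * @NtF _ G k l (Ks t) (gsize (bg (Ks t))) j i)).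
    by move=> j i; rewrite Hv; apply: eq_bigr => t _; rewrite NtFn.
  apply: span_sum => t.
  exact: (@claimT _ G C k l HC _ (Ks t) erefl (HP t) _ (leqnn _)).
- case=> [N [Ks [c [HP Hv]]]].
  apply: (@span_ext _ _ _ _ _ _ (fun j i => \sum_(t < N) c t * @NtF _ G k l (Ks t) 0 j i)).
    by move=> j i; rewrite Hv; apply: eq_bigr => t _; rewrite NtF0.
  apply: span_sum => t.
  exact: (@claimH _ G C k l HC _ (Ks t) erefl (HP t) _ (leq0n _)).
Qed.
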